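(* Let $q$ be a power of the prime $p$, let $\alpha_1(x),\dots,\alpha_d(x),\beta_1(x),\dots,\beta_d(x)\in{\mathbb F}_q[x]$, and define $a\in{\mathbb F}_q[x]^{{\mathbb N}}$ by $a(n)=\beta_1(x)\alpha_1(x)^n+\cdots+\beta_d(x)\alpha_d(x)^n$. Suppose $k\ge2$ is such that $\deg\alpha_i(x)\le k$ and $\deg\beta_i(x)\le(p-1)k$ for all $i$. Then $\operatorname{comp}_p({\mathcal Z}(a))\le q^{d^2k^4p^4}$.
   Context: ${\mathbb N}=\{0,1,2,\dots\}$, ${\mathcal Z}(a)=\{n\in{\mathbb N}\mid a(n)=0\}$. For integers $k\ge1$, $j\ge0$ let $L^k_j:{\mathbb N}\to{\mathbb N}$, $L^k_j(n)=kn+j$. For $S\subseteq{\mathbb N}$ let ${\mathcal V}_S=\{(L^{p^r}_i)^{-1}(S)\mid r\in{\mathbb N},\ 0\le i<p^r\}$ (a set of subsets of ${\mathbb N}$), and $\operatorname{comp}_p(S)=|{\mathcal V}_S|$, the $p$-complexity of $S$. *)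

(* Defs.v *)
From HB Require Import structures.
From mathcomp Require Import all_boot all_order all_algebra all_field.
Set Implicit Arguments. Unset Strict Implicit. Unset Printing Implicit Defensive.
Import GRing.Theory.
Local Open Scope ring_scope.

Definition Lmap (k j : nat) (n : nat) : nat := (k * n + j)%N.

Definition zero_set (R : nzRingType) (a : nat -> R) : nat -> bool :=
  fun n => a n == 0.

Definition kernel_elem (p : nat) (S : nat -> bool) (r i : nat) : nat -> bool :=
  fun n => S (Lmap (p ^ r) i n).

(* comp_p(S) <= N, i.e. |V_S| <= N: the set V_S = {(L^{p^r}_i)^{-1}(S) | r, i < p^r}
   of subsets of N is covered by a list of at most N subsets of N
   (subsets are compared extensionally, i.e. as subsets). *)
Definition comp_le (p : nat) (S : nat -> bool) (N : nat) : Prop :=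
  exists L : seq (nat -> bool),
    (size L <= N)%N /\
    forall r i : nat, (i < p ^ r)%N ->
      exists2 j : nat, (j < size L)%N &
        forall n, nth (fun _ => false) L j n = kernel_elem p S r i n.

(* Main.v *)
Require Import Defs.
From HB Require Import structures.
From mathcomp Require Import all_boot all_order all_algebra all_field.
From mathcomp Require Import zify.
Import GRing.Theory.
Local Open Scope ring_scope.

Set Implicit Arguments. Unset Strict Implicit.

Lemma exp_comp_Xn (F : fieldType) (p : nat) (hc : p \in [pchar F]) (g : {poly F}) :
  g ^+ p = (map_poly (pFrobenius_aut hc) g) \Po 'X^p.
Proof.
have hcp : p \in [pchar {poly F}] by rewrite pchar_poly.
have p0 : (0 < p)%N by apply: prime_gt0; apply: pcharf_prime hc.
elim/poly_ind: g => [|g c IH].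
  by rewrite expr0n gtn_eqF // map_poly0 comp_poly0.
rewrite -[LHS](pFrobenius_autE hcp) rmorphD rmorphM /= !(pFrobenius_autE hcp) IH.
rewrite rmorphD rmorphM /= map_polyX map_polyC /=.
by rewrite comp_polyD comp_polyM comp_polyX comp_polyC polyC_exp.
Qed.

Lemma coef_expp (F : fieldType) (p : nat) (hc : p \in [pchar F]) (g : {poly F}) s :
  (g ^+ p)`_s = if (p %| s)%N then (g`_(s %/ p)) ^+ p else 0.
Proof.
have p0 : (0 < p)%N by apply: prime_gt0; apply: pcharf_prime hc.
by rewrite (exp_comp_Xn hc) coef_comp_poly_Xn // coef_map /= (pFrobenius_autE hc).
Qed.

Lemma coef_sumXF (F : fieldType) (p : nat) (hc : p \in [pchar F])
  (g : 'I_p -> {poly F}) s (l0 : 'I_p) : val l0 = (s %% p)%N ->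
  (\sum_(l < p) 'X^l * g l ^+ p)`_s = (g l0)`_(s %/ p) ^+ p.
Proof.
have p0 : (0 < p)%N by apply: prime_gt0; apply: pcharf_prime hc.
move=> hl0; rewrite coef_sum (bigD1 l0) //= big1 ?addr0.
  rewrite coefXnM hl0 ltnNge leq_mod /= coef_expp //.
  have e : (s - s %% p = s %/ p * p)%N by rewrite {1}(divn_eq s p) addnK.
  by rewrite e dvdn_mull // mulnK.
move=> l hl; rewrite coefXnM; case: ltnP => // ls.
rewrite coef_expp //; case: ifP => // /dvdnP [q hq].
exfalso; move/eqP: hl; apply; apply: val_inj; rewrite /= hl0.
by rewrite -(subnK ls) hq modnMDl modn_small.
Qed.


Lemma frob_inj (F : finFieldType) (p : nat) (hc : p \in [pchar F]) :
  injective (fun x : F => x ^+ p).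
Proof. by move=> x y /=; rewrite -!(pFrobenius_autE hc); apply: fmorph_inj. Qed.

Definition froot (F : finFieldType) (p : nat) (hc : p \in [pchar F]) : F -> F :=
  invF (frob_inj hc).

Lemma frootK (F : finFieldType) (p : nat) (hc : p \in [pchar F]) x :
  (froot hc x) ^+ p = x.
Proof. exact: (f_invF (frob_inj hc)). Qed.

Lemma decomp (F : finFieldType) (p : nat) (hc : p \in [pchar F]) (f : {poly F}) m :
  (size f <= p * m)%N ->
  f = \sum_(l < p) 'X^l * (\poly_(t < m) froot hc (f`_(p * t + l))) ^+ p.
Proof.
have p0 : (0 < p)%N by apply: prime_gt0; apply: pcharf_prime hc.
move=> hs; apply/polyP => s.
rewrite (@coef_sumXF _ _ hc _ s (Ordinal (ltn_pmod s p0))) // coef_poly.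
case: ifP => h.
  by rewrite frootK /= mulnC -divn_eq.
rewrite nth_default ?expr0n ?gtn_eqF //.
apply: leq_trans hs _; move/negbT: h; rewrite -leqNgt leq_divRL // mulnC //.
Qed.

Lemma sumXF_eq0 (F : fieldType) (p : nat) (hc : p \in [pchar F])
  (g : 'I_p -> {poly F}) :
  (\sum_(l < p) 'X^l * g l ^+ p == 0) = [forall l, g l == 0].
Proof.
have p0 : (0 < p)%N by apply: prime_gt0; apply: pcharf_prime hc.
apply/eqP/forallP => [H l|H].
  apply/eqP/polyP => t; have := congr1 (fun q : {poly F} => q`_(p * t + l)) H.
  rewrite (@coef_sumXF _ _ hc _ _ l) /=; last by rewrite mulnC modnMDl modn_small.
  rewrite coef0 => /eqP; rewrite expf_eq0 p0 /= => /eqP.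
  by rewrite mulnC divnMDl // divn_small // addn0 coef0.
by rewrite big1 // => l _; rewrite (eqP (H l)) expr0n gtn_eqF // mulr0.
Qed.


Definition Pb (F : fieldType) d m (b : 'M[F]_(d, m)) (i : 'I_d) : {poly F} :=
  \sum_(j < m) b i j *: 'X^j.

Definition sfun (F : fieldType) d m (alpha : 'I_d -> {poly F}) (n : nat)
  (b : 'M[F]_(d, m)) : {poly F} :=
  \sum_i \sum_(j < m) b i j *: ('X^j * alpha i ^+ n).

Fact sfun_lin (F : fieldType) d m (alpha : 'I_d -> {poly F}) (n : nat) :
  linear (@sfun F d m alpha n).
Proof.
move=> c x y; rewrite /sfun scaler_sumr -big_split; apply: eq_bigr => i _.
rewrite scaler_sumr -big_split; apply: eq_bigr => j _.
by rewrite !mxE scalerDl scalerA.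
Qed.

HB.instance Definition _ (F : fieldType) d m (alpha : 'I_d -> {poly F}) (n : nat) :=
  GRing.isLinear.Build F 'M[F]_(d, m) {poly F} *:%R (@sfun F d m alpha n)
    (sfun_lin alpha n).

Lemma sfunE (F : fieldType) d m (alpha : 'I_d -> {poly F}) (n : nat) b :
  @sfun F d m alpha n b = \sum_i Pb b i * alpha i ^+ n.
Proof.
rewrite /sfun; apply: eq_bigr => i _; rewrite /Pb mulr_suml.
by apply: eq_bigr => j _; rewrite scalerAl.
Qed.

Lemma size_Pb (F : fieldType) d m (b : 'M[F]_(d, m)) i : (size (Pb b i) <= m)%N.
Proof.
rewrite /Pb; apply: (big_ind (fun q : {poly F} => size q <= m)%N).
- by rewrite size_poly0.
- by move=> x y hx hy; apply: leq_trans (size_polyD _ _) _; rewrite geq_max hx hy.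
- by move=> j _; apply: leq_trans (size_scale_leq _ _) _; rewrite size_polyXn.
Qed.

Lemma span0 (F : fieldType) d m (alpha : 'I_d -> {poly F}) (n : nat)
  (X : seq 'M[F]_(d, m)) b :
  (forall x, x \in X -> sfun alpha n x = 0) -> b \in <<X>>%VS -> sfun alpha n b = 0.
Proof.
move=> H hb; rewrite (@coord_span _ _ _ (in_tuple X) b hb).
rewrite linear_sum big1 // => i _; rewrite linearZ /= H ?scaler0 //.
by apply: mem_nth; rewrite ?size_tuple.
Qed.

Definition Zs (F : fieldType) d m (alpha : 'I_d -> {poly F}) (W : seq 'M[F]_(d, m)) n :=
  all (fun b => sfun alpha n b == 0) W.

Lemma Zs_basis (F : fieldType) d m (alpha : 'I_d -> {poly F}) (W : seq 'M[F]_(d, m)) n :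
  Zs alpha W n =
  [forall t : 'I_(d * m), sfun alpha n (nth 0 (vbasis <<W>>%VS) t) == 0].
Proof.
have hdim : (\dim <<W>>%VS <= d * m)%N.
  by apply: leq_trans (dimvS (subvf _)) _; rewrite dimvf dim_matrix.
apply/allP/forallP => [H t|H w hw].
  have hz : forall x, x \in W -> sfun alpha n x = 0 by move=> x /H /eqP.
  case: (ltnP t (\dim <<W>>%VS)) => ht.
    apply/eqP; apply: (span0 hz); apply: vbasis_mem; apply: mem_nth.
    by rewrite size_tuple.
  by rewrite nth_default ?size_tuple // linear0.
apply/eqP.
have hz : forall x, x \in vbasis <<W>>%VS -> sfun alpha n x = 0.
  move=> x /(nthP 0) [t ht <-]; rewrite size_tuple in ht.
  exact: (eqP (H (Ordinal (leq_trans ht hdim)))).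
apply: (span0 hz); rewrite (span_basis (vbasisP _)); exact: memv_span.
Qed.


Definition bnew (F : finFieldType) (p : nat) (hc : p \in [pchar F]) d m
  (alpha : 'I_d -> {poly F}) (b : 'M[F]_(d, m)) (j : nat) (l : 'I_p) : 'M[F]_(d, m) :=
  \matrix_(i, t) froot hc ((Pb b i * alpha i ^+ j)`_(p * t + l)).

Lemma step_eq (F : finFieldType) (p : nat) (hc : p \in [pchar F]) d k
  (alpha : 'I_d -> {poly F}) (b : 'M[F]_(d, ((p - 1) * k).+1)) j n :
  (forall i, size (alpha i) <= k.+1)%N -> (j < p)%N ->
  sfun alpha (p * n + j) b = \sum_(l < p) 'X^l * (sfun alpha n (bnew hc alpha b j l)) ^+ p.
Proof.
have p0 : (0 < p)%N by apply: prime_gt0; apply: pcharf_prime hc.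
have hcp : p \in [pchar {poly F}] by rewrite pchar_poly.
move=> ha hj; rewrite sfunE.
set m := ((p - 1) * k).+1.
transitivity (\sum_i \sum_(l < p) 'X^l * (Pb (bnew hc alpha b j l) i * alpha i ^+ n) ^+ p).
  apply: eq_bigr => i _.
  have hs : (size (Pb b i * alpha i ^+ j)%R <= p * m)%N.
    apply: leq_trans (size_polyMleq _ _) _.
    have h1 := size_Pb b i.
    have h2 := size_poly_exp_leq (alpha i) j.
    have h3 : ((size (alpha i)).-1 * j <= k * (p - 1))%N.
      apply: leq_mul; first by have := ha i; lia.
      by lia.
    have h4 : (m + k * (p - 1) <= p * m)%N.
      rewrite /m; nia.
    move: h1 h2 h3 h4; rewrite -/m; set x2 := size (alpha i ^+ j); set x3 := ((size (alpha i)).-1 * j)%N; set x4 := (p * m)%N; set x5 := (k * (p - 1))%N; lia.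
  rewrite exprD mulnC exprM [_ ^+ p * _]mulrC mulrA.
  rewrite {1}(decomp hc hs) mulr_suml; apply: eq_bigr => l _.
  rewrite exprMn mulrA; congr (_ * _ * _); congr (_ ^+ _).
  rewrite poly_def /Pb; apply: eq_bigr => t _; by rewrite mxE.
rewrite exchange_big; apply: eq_bigr => l _; rewrite -mulr_sumr sfunE; congr (_ * _).
rewrite -[RHS](pFrobenius_autE hcp) rmorph_sum; apply: eq_bigr => i _.
  by [].
Qed.

Definition Wnew (F : finFieldType) (p : nat) (hc : p \in [pchar F]) d m
  (alpha : 'I_d -> {poly F}) (W : seq 'M[F]_(d, m)) (j : nat) :=
  flatten [seq [seq bnew hc alpha b j l | l <- enum 'I_p] | b <- W].

Lemma step_Zs (F : finFieldType) (p : nat) (hc : p \in [pchar F]) d k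
  (alpha : 'I_d -> {poly F}) (W : seq 'M[F]_(d, ((p - 1) * k).+1)) j n :
  (forall i, size (alpha i) <= k.+1)%N -> (j < p)%N ->
  Zs alpha W (p * n + j) = Zs alpha (Wnew hc alpha W j) n.
Proof.
move=> ha hj; elim: W => //= b W IH.
rewrite /Zs /= all_cat -/(Zs _ _ _) IH; congr andb.
rewrite (step_eq _ _ _ ha hj) (sumXF_eq0 hc) all_map.
apply/forallP/allP => [H l _|H l]; first exact: H.
by apply: H; rewrite mem_enum.
Qed.

Lemma iter_Zs (F : finFieldType) (p : nat) (hc : p \in [pchar F]) d k
  (alpha : 'I_d -> {poly F}) (ha : forall i, (size (alpha i) <= k.+1)%N) r :
  forall (W : seq 'M[F]_(d, ((p - 1) * k).+1)) i, (i < p ^ r)%N ->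
  exists W' : seq 'M[F]_(d, ((p - 1) * k).+1), forall n, Zs alpha W (p ^ r * n + i) = Zs alpha W' n.
Proof.
have p0 : (0 < p)%N by apply: prime_gt0; apply: pcharf_prime hc.
elim: r => [|r IH] W i hi.
  exists W => n; rewrite expn0 mul1n.
  by move: hi; rewrite expn0 ltnS leqn0 => /eqP ->; rewrite addn0.
have hi1 : (i %/ p < p ^ r)%N by rewrite ltn_divLR // -expnSr.
have [W2 h2] := IH (Wnew hc alpha W (i %% p)%N) (i %/ p)%N hi1.
exists W2 => n; rewrite -h2 -step_Zs //; last exact: ltn_pmod.
congr Zs.
rewrite {1}(divn_eq i p) expnS mulnDr !mulnA addnA; congr (_ + _ + _).
by rewrite mulnC.
Qed.

Unset Implicit Arguments. Set Strict Implicit.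

Theorem proposition6p5 (p : nat) (F : finFieldType)
  (hp : prime p) (hchar : p \in [pchar F])
  (d k : nat) (alpha beta : 'I_d -> {poly F})
  (hk : (2 <= k)%N)
  (halpha : forall i, (size (alpha i) <= k.+1)%N)
  (hbeta : forall i, (size (beta i) <= (p - 1) * k + 1)%N) :
  comp_le p (zero_set (fun n : nat => \sum_(i < d) beta i * alpha i ^+ n))
    (#|F| ^ (d ^ 2 * k ^ 4 * p ^ 4))%N.
Proof.
have p2 := prime_gt1 hp.
set m := ((p - 1) * k).+1.
set bm : 'M[F]_(d, m) := \matrix_(i, t) (beta i)`_t.
have ha : forall n, \sum_(i < d) beta i * alpha i ^+ n = sfun alpha n bm.
  move=> n; rewrite sfunE; apply: eq_bigr => i _; congr (_ * _).
  rewrite /Pb; apply/polyP => t.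
  have -> : \sum_(j < m) bm i j *: 'X^j = \poly_(j < m) (beta i)`_j.
    by rewrite poly_def; apply: eq_bigr => j _; rewrite mxE.
  rewrite coef_poly; case: ltnP => h //.
  rewrite nth_default //; apply: leq_trans h; rewrite /m -addn1; exact: hbeta.
pose D := (d * m)%N.
pose G (f : {ffun 'I_D -> 'M[F]_(d, m)}) : nat -> bool :=
  fun n => [forall t, sfun alpha n (f t) == 0].
exists [seq G f | f <- enum {: {ffun 'I_D -> 'M[F]_(d, m)}}].
split.
  rewrite size_map -cardE card_ffun card_ord card_mx -expnM.
  apply: leq_pexp2l; first by apply: ltnW; apply: card_finRing_gt1.
  have hm : (m <= k ^ 2 * p ^ 2)%N by rewrite /m; nia.
  rewrite /D.
  have -> : (d * m * (d * m) = d ^ 2 * (m * m))%N by lia.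
  rewrite -mulnA leq_mul2l; apply/orP; right.
  have -> : (k ^ 4 * p ^ 4 = (k ^ 2 * p ^ 2) * (k ^ 2 * p ^ 2))%N.
    by rewrite mulnACA -!expnD.
  exact: leq_mul.
move=> r i hi.
have [W' hW'] := iter_Zs hchar halpha [:: bm] hi.
pose f := [ffun t : 'I_D => nth 0 (vbasis <<W'>>%VS) t].
have fin : f \in enum {: {ffun 'I_D -> 'M[F]_(d, m)}} by rewrite mem_enum.
exists (index f (enum {: {ffun 'I_D -> 'M[F]_(d, m)}})).
  by rewrite size_map index_mem.
move=> n; rewrite (nth_map f) ?index_mem // nth_index //.
rewrite /G /kernel_elem /zero_set /Lmap ha.
have -> : (sfun alpha (p ^ r * n + i) bm == 0) = Zs alpha [:: bm] (p ^ r * n + i).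
  by rewrite /Zs /= andbT.
rewrite hW' Zs_basis; apply: eq_forallb => t; by rewrite ffunE.
Qed.
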